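(* Let $f(w)=\frac12w^TAw-b^Tw+c$ with $A\in\mathbb{R}^{n\times n}$ symmetric positive definite with eigenvalues $0<\lambda_1\le\dots\le\lambda_n$, and let $x^*=A^{-1}b$ be its unique minimizer. Let $x^1\in\mathbb{R}^n$ be arbitrary and let $\{x^k\}$ be generated by the Method of Ellipcenters (ME) described in the context. If ME stops at some iterate $x^k$, then $x^k=x^*$. Otherwise, $x^k\to x^*$ linearly: there exists $\eta\in[0,1)$ with $\eta\le 1-\frac{\lambda_1}{\lambda_n}$ such that for all $k\ge1$, $$f(x^{k+1})-f(x^* )\le \eta^k\,(f(x^1)-f(x^* ))\quad\text{and}\quad \|x^{k+1}-x^*\|_A\le (\sqrt{\eta})^k\,\|x^1-x^*\|_A.$$
   Context: $\|z\|_A=\sqrt{z^TAz}$, $\nabla f(w)=Aw-b$. Method of Ellipcenters (ME) for this $f$: given $x^k$, if $\nabla f(x^k)=0$ stop and return $x^k$. Otherwise set $t_k=\frac{2\nabla f(x^k)^T\nabla f(x^k)}{\nabla f(x^k)^TA\nabla f(x^k)}$ and $y^k=x^k-t_k\nabla f(x^k)$. If $g_x=\nabla f(x^k)$ and $g_y=\nabla f(y^k)$ are linearly independent, set $x^{k+1}=x^k+\alpha_kg_x+\beta_kg_y$, where, with $\Delta_k=\langle g_y,Ag_y\rangle\langle g_x,Ag_x\rangle-\langle g_x,Ag_y\rangle^2$, $\alpha_k=\frac{\langle g_y,g_x\rangle\langle g_x,Ag_y\rangle-\langle g_x,g_x\rangle\langle g_y,Ag_y\rangle}{\Delta_k}$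 and $\beta_k=\frac{-\langle g_y,g_x\rangle\langle g_x,Ag_x\rangle+\langle g_x,g_x\rangle\langle g_y,Ag_x\rangle}{\Delta_k}$ (equivalently, $x^{k+1}$ is the minimizer of $f$ over the affine plane $x^k+\mathrm{span}\{g_x,g_y\}$). If $g_x,g_y$ are linearly dependent, set $x^{k+1}=\frac12(x^k+y^k)$. Then increase $k$ by one and repeat. *)

(* Defs.v *)
From HB Require Import structures.
From mathcomp Require Import all_boot all_order all_algebra.
From mathcomp Require Import reals.
Set Implicit Arguments. Unset Strict Implicit. Unset Printing Implicit Defensive.
Import Order.TTheory GRing.Theory Num.Theory.
Local Open Scope ring_scope.

Section ME.
Variables (R : realType) (n : nat).

Definition dotv (u v : 'cV[R]_n) : R := (u^T *m v) 0 0.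

Definition spd (A : 'M[R]_n) : Prop :=
  A^T = A /\ forall z : 'cV[R]_n, z != 0 -> 0 < dotv z (A *m z).

Definition quadf (A : 'M[R]_n) (b : 'cV[R]_n) (c : R) (w : 'cV[R]_n) : R :=
  2^-1 * dotv w (A *m w) - dotv b w + c.

Definition gradf (A : 'M[R]_n) (b : 'cV[R]_n) (w : 'cV[R]_n) : 'cV[R]_n :=
  A *m w - b.

Definition normA (A : 'M[R]_n) (z : 'cV[R]_n) : R := Num.sqrt (dotv z (A *m z)).

Definition lin_indep2 (u v : 'cV[R]_n) : bool := row_free (col_mx u^T v^T).

(* One step of the Method of Ellipcenters, applied when grad f(x) <> 0. *)
Definition ME_step (A : 'M[R]_n) (b : 'cV[R]_n) (x : 'cV[R]_n) : 'cV[R]_n :=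
  let gx := gradf A b x in
  let t := 2 * dotv gx gx / dotv gx (A *m gx) in
  let y := x - t *: gx in
  let gy := gradf A b y in
  if lin_indep2 gx gy then
    let Delta := dotv gy (A *m gy) * dotv gx (A *m gx) - dotv gx (A *m gy) ^+ 2 in
    let alpha := (dotv gy gx * dotv gx (A *m gy) - dotv gx gx * dotv gy (A *m gy)) / Delta in
    let beta := (- (dotv gy gx * dotv gx (A *m gx)) + dotv gx gx * dotv gy (A *m gx)) / Delta in
    x + alpha *: gx + beta *: gy
  else 2^-1 *: (x + y).

End ME.

(* Main.v *)
Require Import Defs.
From HB Require Import structures.
From mathcomp Require Import all_boot all_order all_algebra.
From mathcomp Require Import reals.
From mathcomp Require Import complex ring lra.
Import Order.TTheory GRing.Theory Num.Theory.
Local Open Scope ring_scope.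

Module SpecM.
Import Num.Def.
Section Spec.
Variables (R : realType) (n : nat).
Local Notation C := (R[i]).
Local Notation f := (real_complex R).
Local Notation "M ^rc" := (map_mx f M) (at level 8).
Local Notation "M ^ct" := (map_mx conjC (trmx M)) (at level 8).

Lemma freal (x : R) : (f x : C) \is Num.real.
Proof. by apply/complex_realP; exists x. Qed.

Lemma conjmx_real m p (M : 'M[R]_(m,p)) : map_mx conjC M^rc = M^rc.
Proof. by apply/matrixP => i j; rewrite !mxE conj_Creal // freal. Qed.

Lemma ct_mul m p q (M : 'M[C]_(m,p)) (N : 'M[C]_(p,q)) : (M *m N)^ct = N^ct *m M^ct.
Proof. by rewrite trmx_mul map_mxM. Qed.

Lemma f_dot (u v : 'cV[R]_n) : f (dotv u v) = (u^rc^ct *m v^rc) 0 0.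
Proof.
rewrite /dotv.
have -> : f ((u^T *m v) 0 0) = (map_mx f (u^T *m v)) 0 0 by rewrite [in RHS]mxE.
rewrite map_mxM; congr ((_ *m _) 0 0).
by apply/matrixP => i j; rewrite !mxE conj_Creal // freal.
Qed.

Lemma diag_form (w : 'cV[C]_n) (d : 'rV[C]_n) :
  (w^ct *m diag_mx d *m w) 0 0 = \sum_i (w i 0)^* * d 0 i * w i 0.
Proof.
rewrite mul_mx_diag mxE; apply: eq_bigr => i _; rewrite !mxE //.
Qed.

Lemma spec_decomp (A : 'M[R]_n) lmin lmax (As : A^T = A)
  (Hmin : forall l, eigenvalue A l -> lmin <= l)
  (Hmax : forall l, eigenvalue A l -> l <= lmax)
  (z : 'cV[R]_n) : exists cw d : 'I_n -> R,
   [/\ forall i, 0 <= cw i, forall i, lmin <= d i <= lmax,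
       dotv z z = \sum_i cw i,
       dotv z (A *m z) = \sum_i d i * cw i &
       dotv (A *m z) (A *m z) = \sum_i d i ^+ 2 * cw i].
Proof.
set Ac := A^rc.
have AcT : Ac^T = Ac by apply/matrixP => p q; rewrite !mxE -{1}As mxE.
have Asym : Ac \is symmetricmx.
  by apply/is_hermitianmxP; rewrite expr0 scale1r map_mx_id // AcT.
have Areal : Ac \is a realmx by apply/mxOverP => p q; rewrite mxE freal.
have Anorm := symmetric_normalmx Asym Areal.
have Aeq := elimT (@orthomx_spectralP _ _ Ac) Anorm.
move: Aeq; set P := spectralmx Ac; set D := spectral_diag Ac => Aeq.
have Pu : P \is unitarymx := spectral_unitarymx Ac.
have Punit : P \in unitmx := unitarymx_unit Pu.
have PiE : invmx P = P^ct := invmx_unitary Pu.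
have PPc : P *m P^ct = 1%:M := elimT unitarymxP Pu.
have PcP : P^ct *m P = 1%:M by rewrite -PiE mulVmx.
have Dreal : D \is a realmx := hermitian_spectral_diag_real (realsym_hermsym Asym Areal).
clearbody P D.
have dR i : D 0 i = f (complex.Re (D 0 i)).
  by rewrite RRe_real //; exact: (mxOverP Dreal).
have eig i : eigenvalue A (complex.Re (D 0 i)).
  rewrite eigenvalue_root_char -(fmorph_root f) map_char_poly.
  rewrite -eigenvalue_root_char.
  suff H : eigenvalue Ac (D 0 i) by rewrite {1}dR in H.
  apply/eigenvalueP; exists (row i P).
    have -> : row i P *m Ac = row i (P *m Ac) by rewrite row_mul.
    have -> : P *m Ac = diag_mx D *m P by rewrite Aeq !mulmxA mulmxV // mul1mx.
    by rewrite row_mul row_diag_mx -scalemxAl rowE.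
  apply/negP => /eqP H.
  have := congr1 (row i) PPc; rewrite row_mul H mul0mx => /matrixP/(_ 0 i).
  by rewrite !mxE eqxx /= => /eqP; rewrite eq_sym oner_eq0.
set zc := z^rc; set w := P *m zc.
have E1 : f (dotv z z) = (w^ct *m w) 0 0.
  rewrite f_dot.
  by rewrite /w ct_mul -mulmxA (mulmxA P^ct) PcP mul1mx.
have E2 : f (dotv z (A *m z)) = (w^ct *m diag_mx D *m w) 0 0.
  rewrite f_dot map_mxM -/Ac -/zc {1}Aeq PiE.
  by rewrite /w ct_mul !mulmxA.
have DD : diag_mx D *m diag_mx D = diag_mx (\row_i (D 0 i * D 0 i)).
  apply/matrixP => p q; rewrite mul_mx_diag !mxE.
  by case: eqP => [->|]; rewrite ?mulr1n ?mulr0n ?mul0r.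
have E3 : f (dotv (A *m z) (A *m z)) = (w^ct *m diag_mx (\row_i (D 0 i * D 0 i)) *m w) 0 0.
  rewrite f_dot map_mxM -/Ac -/zc ct_mul.
  have -> : Ac^ct = Ac by rewrite AcT /Ac conjmx_real.
  rewrite -DD {1 2}Aeq PiE /w ct_mul !mulmxA.
  by rewrite -(mulmxA _ P P^ct) PPc mulmx1.
clearbody w.
exists (fun i => complex.Re ((w i 0)^* * w i 0)), (fun i => complex.Re (D 0 i)).
have cwE i : f (complex.Re ((w i 0)^* * w i 0)) = (w i 0)^* * w i 0.
  by rewrite RRe_real // ger0_real // mulrC mul_conjC_ge0.
split.
- move=> i; have := mul_conjC_ge0 (w i 0); rewrite mulrC -cwE lecE => /andP[_].
  done.
- by move=> i; rewrite Hmin ?Hmax ?eig.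
- apply: complexI; rewrite E1 rmorph_sum mxE; apply: eq_bigr => i _; symmetry.
  transitivity ((w i 0)^* * w i 0); first exact: cwE.
  by rewrite !mxE.
- apply: complexI; rewrite E2 diag_form rmorph_sum; apply: eq_bigr => i _; symmetry.
  transitivity (f (complex.Re (D 0 i)) * f (complex.Re ((w i 0)^* * w i 0))).
    exact: rmorphM.
  by rewrite -dR cwE mulrAC mulrC.
- apply: complexI; rewrite E3 diag_form rmorph_sum; apply: eq_bigr => i _; symmetry.
  transitivity (f (complex.Re (D 0 i)) ^+ 2 * f (complex.Re ((w i 0)^* * w i 0))).
    by rewrite -rmorphXn; exact: rmorphM.
  by rewrite -dR cwE !mxE expr2 mulrCA mulrA.
Qed.
End Spec.
End SpecM.
Import SpecM.

Section Basic.
Variables (R : realType) (n : nat).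
Implicit Types (u v w z : 'cV[R]_n).

Lemma dotvE u v : dotv u v = \sum_i u i 0 * v i 0.
Proof. by rewrite /dotv mxE; apply: eq_bigr => i _; rewrite mxE. Qed.

Lemma dotvC u v : dotv u v = dotv v u.
Proof. by rewrite !dotvE; apply: eq_bigr => i _; rewrite mulrC. Qed.

Lemma dotvDl u v w : dotv (u + v) w = dotv u w + dotv v w.
Proof. by rewrite !dotvE -big_split; apply: eq_bigr => i _; rewrite mxE mulrDl. Qed.

Lemma dotvZl a u v : dotv (a *: u) v = a * dotv u v.
Proof. by rewrite !dotvE mulr_sumr; apply: eq_bigr => i _; rewrite mxE mulrA. Qed.

Lemma dotvNl u v : dotv (- u) v = - dotv u v.
Proof. by rewrite -scaleN1r dotvZl mulN1r. Qed.

Lemma dotvBl u v w : dotv (u - v) w = dotv u w - dotv v w.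
Proof. by rewrite dotvDl dotvNl. Qed.

Lemma dotvDr u v w : dotv w (u + v) = dotv w u + dotv w v.
Proof. by rewrite dotvC dotvDl !(dotvC w). Qed.
Lemma dotvZr a u v : dotv v (a *: u) = a * dotv v u.
Proof. by rewrite dotvC dotvZl dotvC. Qed.
Lemma dotvBr u v w : dotv w (u - v) = dotv w u - dotv w v.
Proof. by rewrite dotvC dotvBl !(dotvC w). Qed.

Lemma dotv_ge0 u : 0 <= dotv u u.
Proof. by rewrite dotvE sumr_ge0 // => i _; rewrite -expr2 sqr_ge0. Qed.

Lemma dotv_gt0 u : u != 0 -> 0 < dotv u u.
Proof.
move=> u0; rewrite lt_def dotv_ge0 andbT; apply: contra u0 => /eqP H.
apply/eqP/matrixP => i j; rewrite ord1 mxE.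
have : \sum_k u k 0 * u k 0 == 0 by rewrite -dotvE H.
rewrite psumr_eq0 => [/allP /(_ i (mem_index_enum i))|k _]; last by rewrite -expr2 sqr_ge0.
by rewrite /= mulf_eq0 orbb => /eqP.
Qed.

Variable A : 'M[R]_n.
Hypothesis As : A^T = A.

Lemma dotv_sym u v : dotv u (A *m v) = dotv (A *m u) v.
Proof. by rewrite /dotv mulmxA trmx_mul As. Qed.

Lemma dotv_sym2 u v : dotv u (A *m v) = dotv v (A *m u).
Proof. by rewrite dotv_sym dotvC. Qed.

End Basic.

Section Step.
Variables (R : realType) (n : nat).

Lemma indep2P (u v : 'cV[R]_n) a c : lin_indep2 u v -> a *: u + c *: v = 0 -> a = 0 /\ c = 0.
Proof.
rewrite /lin_indep2 => /row_free_inj Hf H.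
have H2 : row_mx (a%:M : 'M_1) (c%:M : 'M_1) *m col_mx u^T v^T = 0 *m col_mx u^T v^T.
  rewrite mul_row_col !mul_scalar_mx mul0mx -!linearZ -linearD /= H.
  by rewrite trmx0.
move: (Hf _ _ _ H2) => /matrixP E.
have := E 0 (lshift 1 0); have := E 0 (rshift 1 0).
by rewrite row_mxEl row_mxEr !mxE /= !mulr1n => -> ->.
Qed.

Variables (A : 'M[R]_n) (b : 'cV[R]_n).
Hypothesis As : A^T = A.
Hypothesis Apos : forall z : 'cV[R]_n, z != 0 -> 0 < dotv z (A *m z).

Lemma psd z : 0 <= dotv z (A *m z).
Proof.
have [->|z0] := eqVneq z 0; last exact/ltW/Apos.
by rewrite mulmx0 dotvE big1 // => i _; rewrite !mxE mul0r.
Qed.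

Lemma Aunit : A \in unitmx.
Proof.
rewrite -row_free_unit -kermx_eq0; apply/negPn/negP => /rowV0Pn [v /sub_kermxP vA v0].
have z0 : v^T != 0 by apply: contra v0 => /eqP H; rewrite -[v]trmxK H trmx0.
have := Apos _ z0.
have -> : A *m v^T = 0 by rewrite -As -trmx_mul vA trmx0.
by rewrite dotvE big1 ?ltxx // => i _; rewrite !mxE mulr0.
Qed.

Let xs := invmx A *m b.
Lemma Axs : A *m xs = b.
Proof. by rewrite /xs mulKVmx // Aunit. Qed.

Lemma gradE z : gradf A b z = A *m (z - xs).
Proof. by rewrite /gradf mulmxBr Axs. Qed.

Lemma dotv0l (v : 'cV[R]_n) : dotv 0 v = 0.
Proof. by rewrite dotvE big1 // => i _; rewrite !mxE mul0r. Qed.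

Lemma Eexp (e g h : 'cV[R]_n) a c :
  dotv (e + a *: g + c *: h) (A *m (e + a *: g + c *: h)) =
  dotv e (A *m e) + 2 * a * dotv e (A *m g) + 2 * c * dotv e (A *m h)
  + a ^+ 2 * dotv g (A *m g) + 2 * a * c * dotv g (A *m h) + c ^+ 2 * dotv h (A *m h).
Proof.
rewrite !mulmxDr -!scalemxAr !(dotvDl, dotvDr, dotvZl, dotvZr).
rewrite (dotv_sym2 _ _ _ As g e) (dotv_sym2 _ _ _ As h e) (dotv_sym2 _ _ _ As h g).
ring.
Qed.


Lemma step_bound lmin lmax x (l0 : 0 < lmin) (L0 : 0 < lmax)
  (HL : forall z, dotv z (A *m z) <= lmax * dotv z z)
  (Hl : forall z, lmin * dotv z (A *m z) <= dotv (A *m z) (A *m z))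
  (gx0 : gradf A b x != 0) :
  dotv (ME_step A b x - xs) (A *m (ME_step A b x - xs))
   <= (1 - lmin / lmax) * dotv (x - xs) (A *m (x - xs)).
Proof.
set E := fun z => dotv (z - xs) (A *m (z - xs)).
change (E (ME_step A b x) <= (1 - lmin / lmax) * E x).
set g := gradf A b x.
set e := x - xs.
have gE : g = A *m e by rewrite /g gradE.
set gg := dotv g g. set P := dotv g (A *m g).
have hgg : 0 < gg by apply: dotv_gt0.
have hP : 0 < P := Apos _ gx0.
have eg : dotv e (A *m g) = gg by rewrite (dotv_sym2 _ _ _ As) -gE.
set h := gradf A b (x - (2 * gg / P) *: g).
have Fexp a c : E (x + a *: g + c *: h) = dotv e (A *m e) + 2*a*gg + 2*c*dotv e (A *m h)
   + a^+2 * P + 2*a*c*dotv g (A *m h) + c^+2 * dotv h (A *m h).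
  by rewrite /E addrAC [x + _ - xs]addrAC -/e Eexp eg.
have key : E (ME_step A b x) <= E (x + (- (gg / P)) *: g + 0 *: h).
  rewrite /ME_step -/g -/gg -/P -/h.
  set hg := dotv h g; set Q := dotv g (A *m h); set S := dotv h (A *m h).
  have eh : dotv e (A *m h) = hg by rewrite (dotv_sym2 _ _ _ As) -gE.
  have Q' : dotv h (A *m g) = Q by rewrite (dotv_sym2 _ _ _ As).
  rewrite Q'.
  case: ifP => Hind; last first.
    have -> : 2^-1 *: (x + (x - (2 * gg / P) *: g)) = x + (- (gg / P)) *: g + 0 *: h.
      apply/matrixP => i j; rewrite !mxE; field.
      by rewrite lt0r_neq0.
    exact: le_refl.
  have q_ge0 u v : 0 <= u^+2 * P + 2*u*v*Q + v^+2*S.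
    by have := psd (0 + u *: g + v *: h); rewrite Eexp !dotv0l !mulr0 !add0r.
  have D0 : S * P - Q ^+ 2 != 0.
    apply/eqP => D0.
    have : dotv (0 + Q *: g + (- P) *: h) (A *m (0 + Q *: g + (- P) *: h)) = 0.
      rewrite Eexp !dotv0l !mulr0 !add0r.
      have -> : Q ^+ 2 * P + 2 * Q * - P * Q + (- P) ^+ 2 * S = P * (S * P - Q ^+ 2) by ring.
      by rewrite D0 mulr0.
    have [H0|nz] := eqVneq (0 + Q *: g + (- P) *: h) 0.
      move=> _; rewrite add0r in H0.
      have [_ /eqP] := indep2P _ _ _ _ Hind H0.
      by rewrite oppr_eq0 (gt_eqF hP).
    by move=> H0; have := Apos _ nz; rewrite H0 ltxx.
  rewrite !Fexp eh.
  rewrite -/Q -/S.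
  set al := (_ / _ ); set be := (_ / _).
  have N1 : gg + al * P + be * Q = 0 by rewrite /al /be; field.
  have N2 : hg + al * Q + be * S = 0 by rewrite /al /be; field.
  clearbody al be.
  rewrite -subr_ge0.
  set Ee := dotv e (A *m e).
  set u := - (gg / P) - al; set v := 0 - be.
  have -> : Ee + 2 * - (gg / P) * gg + 2 * 0 * hg + (- (gg / P)) ^+ 2 * P +
   2 * - (gg / P) * 0 * Q + 0 ^+ 2 * S -
   (Ee + 2 * al * gg + 2 * be * hg + al ^+ 2 * P + 2 * al * be * Q + be ^+ 2 * S)
   = (u^+2 * P + 2*u*v*Q + v^+2*S) + 2*u*(gg + al * P + be * Q) + 2*v*(hg + al * Q + be * S).
    by rewrite /u /v; ring.
  by rewrite N1 N2 !mulr0 !addr0.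
apply: (le_trans key); rewrite Fexp.
have -> : E x = dotv e (A *m e) by [].
set Ee := dotv e (A *m e).
have hPL : P <= lmax * gg := HL g.
have hlE : lmin * Ee <= gg by move: (Hl e); rewrite -/Ee -gE.
have Ee0 : 0 <= Ee := psd e.
have -> : Ee + 2 * - (gg / P) * gg + 2 * 0 * dotv e (A *m h) + (- (gg / P)) ^+ 2 * P +
   2 * - (gg / P) * 0 * dotv g (A *m h) + 0 ^+ 2 * dotv h (A *m h) = Ee - gg ^+ 2 / P.
  by field; rewrite lt0r_neq0.
rewrite mulrBl mul1r lerD2l lerN2 ler_pdivlMr //.
set r := lmin / lmax.
have rL : r * lmax = lmin by rewrite /r divfK // lt0r_neq0.
have r0 : 0 <= r * Ee by rewrite mulr_ge0 // divr_ge0 // ltW.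
apply: (le_trans (ler_wpM2l r0 hPL)).
have -> : r * Ee * (lmax * gg) = (lmin * Ee) * gg by rewrite -rL; ring.
by rewrite expr2; apply: ler_wpM2r => //; apply: ltW.
Qed.
End Step.

Lemma sqrtrX (R : rcfType) (a : R) k : 0 <= a -> Num.sqrt (a ^+ k) = Num.sqrt a ^+ k.
Proof.
move=> a0; elim: k => [|k IH]; first by rewrite !expr0 sqrtr1.
by rewrite !exprS sqrtrM // IH.
Qed.

Theorem mainTheorem4 (R : realType) (n : nat) (A : 'M[R]_n) (b : 'cV[R]_n) (c : R)
  (lmin lmax : R) (x : nat -> 'cV[R]_n) :
  spd A ->
  eigenvalue A lmin -> (forall l, eigenvalue A l -> lmin <= l) ->
  eigenvalue A lmax -> (forall l, eigenvalue A l -> l <= lmax) ->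
  (forall k, (1 <= k)%N -> gradf A b (x k) != 0 -> x k.+1 = ME_step A b (x k)) ->
  let xstar := invmx A *m b in
  (forall k, (1 <= k)%N -> gradf A b (x k) = 0 -> x k = xstar) /\
  ((forall k, (1 <= k)%N -> gradf A b (x k) != 0) ->
   exists eta : R, [/\ 0 <= eta, eta < 1, eta <= 1 - lmin / lmax &
     forall k, (1 <= k)%N ->
       quadf A b c (x k.+1) - quadf A b c xstar <= eta ^+ k * (quadf A b c (x 1) - quadf A b c xstar)
       /\ normA A (x k.+1 - xstar) <= Num.sqrt eta ^+ k * normA A (x 1 - xstar)]).
Proof.
move=> [As Apos] Emin Hmin Emax Hmax Hstep xstar.
have Au := Aunit _ _ _ As Apos.
split.
  move=> k _ /eqP; rewrite /gradf subr_eq0 => /eqP H.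
  by rewrite /xstar -H mulKmx.
move=> Hall.
have eigpos l : eigenvalue A l -> 0 < l.
  move=> /eigenvalueP [v vA v0].
  have z0 : v^T != 0 by apply: contra v0 => /eqP H; rewrite -[v]trmxK H trmx0.
  have := Apos _ z0.
  have -> : A *m v^T = l *: v^T by rewrite -As -trmx_mul vA linearZ.
  rewrite dotvZr pmulr_lgt0 //.
  by apply: dotv_gt0.
have l0 := eigpos _ Emin.
have L0 := eigpos _ Emax.
have lL : lmin <= lmax := Hmin _ Emax.
have HL z : dotv z (A *m z) <= lmax * dotv z z.
  have [cw [d [c0 dB E1 E2 _]]] := spec_decomp _ _ _ _ _ As Hmin Hmax z.
  rewrite E1 E2 mulr_sumr; apply: ler_sum => i _.
  by apply: ler_wpM2r => //; case/andP: (dB i).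
have Hl z : lmin * dotv z (A *m z) <= dotv (A *m z) (A *m z).
  have [cw [d [c0 dB _ E2 E3]]] := spec_decomp _ _ _ _ _ As Hmin Hmax z.
  rewrite E2 E3 mulr_sumr; apply: ler_sum => i _.
  rewrite mulrA expr2; apply: ler_wpM2r => //.
  case/andP: (dB i) => h1 _.
  by apply: ler_wpM2r => //; apply: le_trans h1; apply: ltW.
set eta := 1 - lmin / lmax.
have r0 : 0 < lmin / lmax by apply: divr_gt0.
have r1 : lmin / lmax <= 1 by rewrite ler_pdivrMr // mul1r.
exists eta; split.
- by rewrite subr_ge0.
- by rewrite ltrBlDr ltrDl.
- by [].
set E := fun z => dotv (z - xstar) (A *m (z - xstar)).
have rec k : (1 <= k)%N -> E (x k.+1) <= eta * E (x k).
  move=> k1; rewrite /E Hstep //; last exact: Hall.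
  by apply: step_bound => //; apply: Hall.
have eta0 : 0 <= eta by rewrite subr_ge0.
have geo m : E (x m.+2) <= eta ^+ m.+1 * E (x 1).
  elim: m => [|m IH]; first by rewrite expr1; apply: rec.
  apply: (le_trans (rec _ _)) => //.
  by rewrite exprS -mulrA; apply: ler_wpM2l.
have qE z : quadf A b c z - quadf A b c xstar = E z / 2.
  have db w : dotv b w = dotv xstar (A *m w) by rewrite (dotv_sym _ _ _ As) (Axs _ _ _ _ As Apos).
  rewrite /quadf /E !db mulmxBr !(dotvBl, dotvBr) (dotv_sym2 _ _ _ As z xstar).
  by field.
have nE z : normA A (z - xstar) = Num.sqrt (E z) by [].
move=> k; case: k => [//|m] _.
rewrite !qE !nE; split.
  by rewrite mulrA ler_pM2r ?invr_gt0 ?ltr0n //; apply: geo.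
rewrite -sqrtrX // -sqrtrM ?exprn_ge0 // ler_sqrt; first exact: geo.
by rewrite mulr_ge0 ?exprn_ge0 // (psd _ _ _ Apos).
Qed.
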